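(* Let $\alpha\in(0,1)$ and $\nu\in\mathbb{N}$, and let $K_{\alpha,\nu}:\mathbb{R}\to\mathbb{R}$ be defined by \[ K_{\alpha,\nu}(x)=\sum_{k=0}^{\infty}2^{-2\alpha\nu k}\,\phi(2^{2\nu k}x), \] where $\phi:\mathbb{R}\to[0,1]$ is the $2$-periodic sawtooth function with $\phi(x)=|x|$ for $x\in[-1,1]$ and $\phi(x+2)=\phi(x)$ for all $x$. (i) $K_{\alpha,\nu}\in C^{0,\alpha}(\mathbb{R})$ for every $\nu\in\mathbb{N}$. Moreover $0\le K_{\alpha,\nu}\le 1/(1-2^{-2\nu\alpha})$, and for all $x,y\in\mathbb{R}$ with $|x-y|\le 2$, \[ |K_{\alpha,\nu}(x)-K_{\alpha,\nu}(y)|\le C(\alpha,\nu)\,|x-y|^{\alpha},\qquad C(\alpha,\nu):=\frac{1}{1-2^{-2\nu(1-\alpha)}}+\frac{2}{2^{2\nu(\alpha-1)}-2^{-2\nu}}. \] (ii) If $2\nu>1/(1-\alpha)$, then $K_{\alpha,\nu}$ is at no point of $\mathbb{R}$ pointwise H\''older continuous of order $\beta$, for any $\beta\in(\alpha,1]$. Moreover, for every $x\in\mathbb{R}$, every $m\in\mathbb{N}$ and every $\beta\in(\alpha,1]$, \[ \frac{|K_{\alpha,\nu}(x+t_m(x))-K_{\alpha,\nu}(x)|}{|t_m(x)|^{\beta}}\ \ge\ K(m,\nu,\alpha,\beta):=\frac{2^{\beta-1}\big(2^{2\nu(1-\alpha)}-2\big)}{2^{2\nu(1-\alpha)}-1}\big(2^{2\nu(\beta-\alpha)}\big)^{m},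 \] where $t_m:\mathbb{R}\to\{\pm 2^{-2\nu m-1}\}$ is the step function \[ t_m(x)=2^{-2\nu m-1}\sum_{i=-\infty}^{+\infty}\Big[\chi_{(i,i+\frac12]}(2^{2\nu m}x)-\chi_{(i+\frac12,i+1]}(2^{2\nu m}x)\Big], \] i.e. $t_m(x)=+2^{-2\nu m-1}$ if $i2^{-2\nu m}<x\le i2^{-2\nu m}+2^{-2\nu m-1}$ for some $i\in\mathbb{Z}$, and $t_m(x)=-2^{-2\nu m-1}$ if $i2^{-2\nu m}+2^{-2\nu m-1}<x\le (i+1)2^{-2\nu m}$ for some $i\in\mathbb{Z}$.
   Context: A function $f\in C^0(\mathbb{R})$ is called (pointwise) H\''older continuous of order $\beta$ ($C^{0,\beta}$) at $x\in\mathbb{R}$ if there exist $r,C>0$ such that $|f(y)-f(x)|\le C|y-x|^{\beta}$ for all $y\in[x-r,x+r]$. $\chi_A$ denotes the indicator function of a set $A$. *)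

(* Defs.v *)
From Stdlib Require Import Reals Lra ZArith.
From Stdlib Require Import Classical ClassicalEpsilon.
From Coquelicot Require Import Coquelicot.
Open Scope R_scope.

(* a ^ b for a >= 0, b real, with the convention 0 ^ b = 0 (used only for b > 0). *)
Definition rpow (a b : R) : R := if Rle_dec a 0 then 0 else Rpower a b.

(* The 2-periodic sawtooth: phi x = |x - 2n| where 2n is the even integer with
   x - 2n in [-1,1); so phi x = |x| on [-1,1] and phi (x+2) = phi x. *)
Definition phi (x : R) : R := Rabs (x - 2 * IZR (Int_part ((x + 1) / 2))).

Definition Kan (alpha : R) (nu : nat) (x : R) : R :=
  Series (fun k : nat => Rpower 2 (- (2 * alpha * INR nu * INR k)) * phi (2 ^ (2 * nu * k) * x)).

Definition holder_at (f : R -> R) (beta x : R) : Prop :=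
  exists r C : R, 0 < r /\ 0 < C /\
    forall y, x - r <= y <= x + r -> Rabs (f y - f x) <= C * rpow (Rabs (y - x)) beta.

Definition holder_global (f : R -> R) (alpha : R) : Prop :=
  (forall x, continuity_pt f x) /\
  exists C : R, forall x y, Rabs (f x - f y) <= C * rpow (Rabs (x - y)) alpha.

Definition tm (nu m : nat) (x : R) : R :=
  let s := / 2 ^ (2 * nu * m) in
  if excluded_middle_informative (exists i : Z, IZR i * s < x <= IZR i * s + s / 2)
  then s / 2 else - (s / 2).

Definition Cconst (alpha : R) (nu : nat) : R :=
  1 / (1 - Rpower 2 (- (2 * INR nu * (1 - alpha))))
  + 2 / (Rpower 2 (2 * INR nu * (alpha - 1)) - Rpower 2 (- (2 * INR nu))).

Definition Kconst (m nu : nat) (alpha beta : R) : R :=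
  Rpower 2 (beta - 1) * (Rpower 2 (2 * INR nu * (1 - alpha)) - 2)
  / (Rpower 2 (2 * INR nu * (1 - alpha)) - 1)
  * (Rpower 2 (2 * INR nu * (beta - alpha))) ^ m.

(* Main.v *)
Require Import Defs.
From Stdlib Require Import Reals Lra Lia ZArith Classical ClassicalEpsilon.
From Coquelicot Require Import Coquelicot.
Open Scope R_scope.

Lemma phi_base x : exists n : Z, phi x = Rabs (x - 2 * IZR n) /\ -1 <= x - 2 * IZR n < 1.
Proof.
  exists (Int_part ((x+1)/2)). split; [reflexivity|].
  destruct (base_Int_part ((x+1)/2)) as [H1 H2]. lra.
Qed.

Lemma two_int_far a k n : k <> n -> Rabs (a - 2 * IZR k) + Rabs (a - 2 * IZR n) >= 2.
Proof.
  intros Hkn.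
  assert (H: (k - n >= 1)%Z \/ (n - k >= 1)%Z) by lia.
  destruct H as [H|H]; apply Z.ge_le in H; apply IZR_le in H; rewrite minus_IZR in H;
  unfold Rabs; repeat destruct Rcase_abs; lra.
Qed.

Lemma phi_le x k : phi x <= Rabs (x - 2 * IZR k).
Proof.
  destruct (phi_base x) as [n [E H]]. rewrite E.
  destruct (Z.eq_dec k n) as [->|Hk]; [lra|].
  pose proof (two_int_far x k n Hk). unfold Rabs in *; repeat destruct Rcase_abs; lra.
Qed.

Lemma phi_eq x k : -1 <= x - 2 * IZR k <= 1 -> phi x = Rabs (x - 2 * IZR k).
Proof.
  intros Hx. destruct (phi_base x) as [n [E H]]. rewrite E.
  destruct (Z.eq_dec k n) as [->|Hk]; [lra|].
  pose proof (two_int_far x k n Hk). unfold Rabs in *; repeat destruct Rcase_abs; lra.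
Qed.

Lemma phi_range x : 0 <= phi x <= 1.
Proof.
  destruct (phi_base x) as [n [E H]]. rewrite E. unfold Rabs; destruct Rcase_abs; lra.
Qed.

Lemma phi_lip x y : Rabs (phi x - phi y) <= Rabs (x - y).
Proof.
  destruct (phi_base x) as [n [E H]]. destruct (phi_base y) as [m [E' H']].
  pose proof (phi_le x m). pose proof (phi_le y n).
  rewrite E in *. rewrite E' in *.
  unfold Rabs in *; repeat destruct Rcase_abs; lra.
Qed.

Lemma phi_per x k : phi (x + 2 * IZR k) = phi x.
Proof.
  destruct (phi_base x) as [n [E H]]. rewrite E.
  rewrite (phi_eq _ (n + k)); [|rewrite plus_IZR; lra].
  rewrite plus_IZR; f_equal; ring.
Qed.

Lemma phi_affine j a b : IZR j <= a <= IZR j + 1 -> IZR j <= b <= IZR j + 1 ->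
  Rabs (phi b - phi a) = Rabs (b - a).
Proof.
  intros Ha Hb. destruct (Z.Even_or_Odd j) as [[n ->]|[n ->]].
  - rewrite mult_IZR in Ha, Hb.
    rewrite (phi_eq a n) by lra. rewrite (phi_eq b n) by lra.
    rewrite (Rabs_right (a - _)) by lra. rewrite (Rabs_right (b - _)) by lra.
    f_equal; ring.
  - rewrite plus_IZR, mult_IZR in Ha, Hb.
    rewrite (phi_eq a (n+1)) by (rewrite plus_IZR; lra).
    rewrite (phi_eq b (n+1)) by (rewrite plus_IZR; lra).
    rewrite plus_IZR.
    rewrite (Rabs_left1 (a - _)) by lra. rewrite (Rabs_left1 (b - _)) by lra.
    replace (- (b - 2 * (IZR n + 1)) - - (a - 2 * (IZR n + 1))) with (-(b-a)) by ring.
    apply Rabs_Ropp.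
Qed.

Lemma Rpower_pos a y : 0 < Rpower a y.
Proof. unfold Rpower; apply exp_pos. Qed.

Definition bb (nu : nat) := Rpower 2 (2 * INR nu).

Lemma bb_ge nu : (1 <= nu)%nat -> 4 <= bb nu.
Proof.
  intros H. unfold bb. replace 4 with (Rpower 2 (INR 2)).
  - apply Rle_Rpower; [lra|]. apply le_INR in H. simpl in *. lra.
  - rewrite Rpower_pow by lra. simpl; lra.
Qed.

Lemma w_eq alpha nu k : Rpower 2 (- (2 * alpha * INR nu * INR k)) = Rpower (bb nu) (- alpha) ^ k.
Proof.
  rewrite <- Rpower_pow by apply Rpower_pos. unfold bb. rewrite !Rpower_mult. f_equal; ring.
Qed.

Lemma p2_eq nu k : 2 ^ (2 * nu * k) = bb nu ^ k.
Proof.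
  rewrite pow_mult. unfold bb. rewrite <- (Rpower_pow (2*nu) 2) by lra. rewrite mult_INR. reflexivity.
Qed.

Definition T alpha nu x k := Rpower 2 (- (2 * alpha * INR nu * INR k)) * phi (2 ^ (2 * nu * k) * x).

Lemma r_bounds alpha nu : 0 < alpha -> (1 <= nu)%nat -> 0 < Rpower (bb nu) (-alpha) < 1.
Proof.
  intros Ha Hn. split; [apply Rpower_pos|]. pose proof (bb_ge nu Hn).
  rewrite <- (Rpower_O (bb nu)) by lra. apply Rpower_lt; lra.
Qed.

Lemma Series_zero : Series (fun _ => 0) = 0.
Proof.
  rewrite (Series_ext _ (fun n => 0 * 0)) by (intros; ring).
  rewrite (Series_scal_l 0 (fun _ => 0)). ring.
Qed.

Section S.
Variables (alpha : R) (nu : nat) (Ha : 0 < alpha < 1) (Hnu : (1 <= nu)%nat).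
Let r := Rpower (bb nu) (-alpha).

Lemma T_bound x k : 0 <= T alpha nu x k <= r ^ k.
Proof.
  unfold T. rewrite w_eq. fold r. pose proof (phi_range (2 ^ (2 * nu * k) * x)).
  pose proof (pow_lt r k (proj1 (r_bounds alpha nu (proj1 Ha) Hnu))). nra.
Qed.

Lemma geom_ex : ex_series (fun k => r ^ k).
Proof.
  eexists. apply is_series_geom. pose proof (r_bounds alpha nu (proj1 Ha) Hnu). fold r in H.
  rewrite Rabs_right; lra.
Qed.

Lemma geom_val : Series (fun k => r ^ k) = / (1 - r).
Proof.
  apply is_series_unique, is_series_geom. pose proof (r_bounds alpha nu (proj1 Ha) Hnu). fold r in H.
  rewrite Rabs_right; lra.
Qed.

Lemma T_ex x : ex_series (T alpha nu x).
Proof.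
  apply (@ex_series_le R_AbsRing R_CompleteNormedModule _ (fun k => r ^ k)); [|apply geom_ex].
  intros k. change (norm (T alpha nu x k)) with (Rabs (T alpha nu x k)).
  pose proof (T_bound x k). rewrite Rabs_right; lra.
Qed.

Lemma Kan_T x : Kan alpha nu x = Series (T alpha nu x).
Proof. reflexivity. Qed.

Lemma Kan_bounds x : 0 <= Kan alpha nu x <= / (1 - r).
Proof.
  rewrite Kan_T. split.
  - rewrite <- Series_zero. 
    apply Series_le; [|apply T_ex]. intros; pose proof (T_bound x n); lra.
  - rewrite <- geom_val. apply Series_le; [|apply geom_ex]. intros; apply T_bound.
Qed.

End S.

Lemma arch_nat x : exists n:nat, x < INR n.
Proof.
  destruct (archimed x) as [H1 H2]. exists (Z.to_nat (up x)).
  destruct (Z_le_gt_dec 0 (up x)).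
  - rewrite INR_IZR_INZ, Z2Nat.id by lia. lra.
  - replace (Z.to_nat (up x)) with 0%nat by lia. simpl. apply Z.gt_lt in g. apply IZR_lt in g. lra.
Qed.

Lemma bern b n : 1 <= b -> 1 + INR n * (b - 1) <= b ^ n.
Proof.
  intros Hb. induction n as [|n IH]; [simpl; lra|]. rewrite S_INR; simpl.
  assert (0 <= INR n) by apply pos_INR. assert (0 <= INR n * (b-1) * (b-1)) by (apply Rmult_le_pos; [apply Rmult_le_pos|]; lra). nra.
Qed.

Lemma Rpower_neg_nat b n : 0 < b -> Rpower b (- INR n) = / b ^ n.
Proof. intros. rewrite Rpower_Ropp, Rpower_pow; auto. Qed.

Lemma find_N b h : 2 <= b -> 0 < h <= 1 ->
  exists N, Rpower b (- INR (S N)) < h <= Rpower b (- INR N).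
Proof.
  intros Hb Hh.
  assert (Hex : exists n, Rpower b (- INR n) < h).
  { destruct (arch_nat (/ h)) as [n Hn]. exists n. rewrite Rpower_neg_nat by lra.
    pose proof (bern b n ltac:(lra)). assert (0 <= INR n) by apply pos_INR.
    assert (0 < / h) by (apply Rinv_0_lt_compat; lra).
    replace h with (/ / h) by (field; lra).
    apply Rinv_lt_contravar; [|nra]. apply Rmult_lt_0_compat; [lra|]. apply pow_lt; lra. }
  destruct Hex as [n Hn]. induction n as [|n IH].
  - simpl in Hn. rewrite Ropp_0, Rpower_O in Hn by lra. lra.
  - destruct (Rlt_dec (Rpower b (- INR n)) h) as [H|H].
    + exact (IH H).
    + exists n. split; [exact Hn| lra].
Qed.

Section S2.
Variables (alpha : R) (nu : nat) (Ha : 0 < alpha < 1) (Hnu : (1 <= nu)%nat).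
Let r := Rpower (bb nu) (-alpha).
Let b := bb nu.
Let q := Rpower (bb nu) (1 - alpha).

Definition D x y k := T alpha nu x k - T alpha nu y k.

Lemma rpos : 0 < r < 1. Proof. exact (r_bounds alpha nu (proj1 Ha) Hnu). Qed.
Lemma bge : 4 <= b. Proof. exact (bb_ge nu Hnu). Qed.
Lemma rbq : r * b = q.
Proof.
  unfold r, b, q. rewrite <- (Rpower_1 (bb nu)) at 2 by (pose proof bge; unfold b in *; lra).
  rewrite <- Rpower_plus. f_equal; ring.
Qed.
Lemma qgt : 1 < q.
Proof.
  unfold q. pose proof bge. unfold b in *.
  assert (E0 : Rpower (bb nu) 0 = 1) by (apply Rpower_O; lra). rewrite <- E0 at 1.
  apply Rpower_lt; [pose proof bge; unfold b in *; lra | lra].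
Qed.

Lemma Kan_diff x y : Kan alpha nu x - Kan alpha nu y = Series (D x y).
Proof. rewrite !Kan_T. unfold D. rewrite Series_minus; auto; apply T_ex; auto. Qed.

Lemma D_abs k x y : Rabs (D x y k) <= r ^ k.
Proof.
  unfold D. pose proof (T_bound alpha nu Ha Hnu x k). pose proof (T_bound alpha nu Ha Hnu y k).
  fold r in H, H0. unfold Rabs; destruct Rcase_abs; lra.
Qed.

Lemma D_lip k x y : Rabs (D x y k) <= q ^ k * Rabs (x - y).
Proof.
  unfold D, T. rewrite w_eq. fold r. rewrite !p2_eq. fold b.
  rewrite <- Rmult_minus_distr_l, Rabs_mult.
  pose proof (phi_lip (b ^ k * x) (b ^ k * y)).
  rewrite <- Rmult_minus_distr_l, Rabs_mult in H.
  rewrite <- rbq, Rpow_mult_distr.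
  pose proof (pow_lt r k (proj1 rpos)). pose proof (pow_lt b k ltac:(pose proof bge; lra)).
  rewrite (Rabs_right (r ^ k)) by lra. rewrite (Rabs_right (b ^ k)) in H by lra.
  rewrite Rmult_assoc. apply Rmult_le_compat_l; lra.
Qed.

Lemma absD_ex x y : ex_series (fun k => Rabs (D x y k)).
Proof.
  apply (@ex_series_le R_AbsRing R_CompleteNormedModule _ (fun k => r ^ k)); [|apply geom_ex; auto].
  intros k. change (norm (Rabs (D x y k))) with (Rabs (Rabs (D x y k))).
  rewrite Rabs_Rabsolu. apply D_abs.
Qed.

Lemma diff_all x y : Rabs (Kan alpha nu x - Kan alpha nu y) <= / (1 - r).
Proof.
  rewrite Kan_diff. eapply Rle_trans; [apply Series_Rabs, absD_ex|].
  unfold r. rewrite <- geom_val by auto. apply Series_le; [|apply geom_ex; auto].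
  intros; split; [apply Rabs_pos| apply D_abs].
Qed.

Lemma diff_split N x y : Rabs (Kan alpha nu x - Kan alpha nu y) <=
  sum_f_R0 (fun k => q ^ k * Rabs (x - y)) N + r ^ (S N) / (1 - r).
Proof.
  rewrite Kan_diff. eapply Rle_trans; [apply Series_Rabs, absD_ex|].
  rewrite (Series_incr_n _ (S N)) by (lia || apply absD_ex). simpl Init.Nat.pred.
  apply Rplus_le_compat.
  - apply sum_Rle. intros; apply D_lip.
  - assert (Hg : ex_series (fun k => r ^ (S N + k))).
    { apply (ex_series_incr_n (fun k => r ^ k)). apply geom_ex; auto. }
    eapply Rle_trans; [apply (Series_le _ (fun k => r ^ (S N + k)))|].
    + intros; split; [apply Rabs_pos| apply D_abs].
    + exact Hg.
    + rewrite (Series_ext _ (fun k => r ^ (S N) * r ^ k)) by (intros; apply pow_add).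
      rewrite Series_scal_l. unfold r. rewrite geom_val by auto. unfold Rdiv; lra.
Qed.

End S2.

Section S3.
Variables (alpha : R) (nu : nat) (Ha : 0 < alpha < 1) (Hnu : (1 <= nu)%nat).
Let r := Rpower (bb nu) (-alpha).
Let b := bb nu.
Let q := Rpower (bb nu) (1 - alpha).

Lemma R2b t : Rpower 2 (2 * INR nu * t) = Rpower (bb nu) t.
Proof. unfold bb; rewrite Rpower_mult; reflexivity. Qed.

Lemma Cconst_eq : Cconst alpha nu = 1 / (1 - / q) + 2 * q / (1 - r).
Proof.
  unfold Cconst.
  replace (- (2 * INR nu * (1 - alpha))) with (2 * INR nu * (- (1 - alpha))) by ring.
  replace (2 * INR nu * (alpha - 1)) with (2 * INR nu * (- (1 - alpha))) by ring.
  replace (- (2 * INR nu)) with (2 * INR nu * (Ropp 1)) by ring.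
  rewrite !R2b, !Rpower_Ropp, Rpower_1 by (pose proof (bge nu Hnu); unfold b in *; lra).
  fold q. fold b. f_equal.
  pose proof (rbq alpha nu Hnu). pose proof (rpos alpha nu Ha Hnu). pose proof (qgt alpha nu Ha Hnu).
  fold r in H, H0. fold q in H, H1. fold b in H. pose proof (bge nu Hnu). fold b in H2.
  rewrite <- H. field. repeat split; try lra.
Qed.

Lemma Rpower_one_l y : Rpower 1 y = 1.
Proof. unfold Rpower. rewrite ln_1, Rmult_0_r, exp_0. reflexivity. Qed.

Lemma holder_main x y : Rabs (Kan alpha nu x - Kan alpha nu y) <= Cconst alpha nu * rpow (Rabs (x - y)) alpha.
Proof.
  rewrite Cconst_eq.
  pose proof (rbq alpha nu Hnu) as Hrbq. pose proof (rpos alpha nu Ha Hnu) as Hr.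
  pose proof (qgt alpha nu Ha Hnu) as Hq. pose proof (bge nu Hnu) as Hb.
  fold r in Hrbq, Hr. fold q in Hrbq, Hq. fold b in Hrbq, Hb.
  assert (Ec1 : 1 / (1 - / q) = q / (q - 1)) by (field; lra).
  rewrite Ec1.
  assert (c1pos : 0 < q / (q - 1)) by (apply Rdiv_lt_0_compat; lra).
  assert (c2pos : 0 < 2 * q / (1 - r)) by (apply Rdiv_lt_0_compat; lra).
  set (h := Rabs (x - y)).
  destruct (Req_dec h 0) as [H0|H0].
  - assert (x = y). { unfold h in H0. destruct (Req_dec (x - y) 0) as [Hxy|Hxy]; [lra|]. exfalso. apply Rabs_no_R0 in Hxy. auto. }
    subst y. rewrite Rminus_diag, Rabs_R0. unfold rpow. rewrite H0. destruct Rle_dec; [|lra]. lra.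
  - assert (hpos : 0 < h) by (pose proof (Rabs_pos (x - y)); unfold h in *; lra).
    unfold rpow. destruct Rle_dec as [Hc|_]; [lra|].
    set (P := Rpower h alpha).
    destruct (Rle_dec h 1) as [Hh1|Hh1].
    + destruct (find_N b h ltac:(lra) ltac:(lra)) as [N [HN1 HN2]].
      eapply Rle_trans; [apply (diff_split alpha nu Ha Hnu N)|]. fold r q h.
      rewrite <- scal_sum, tech3 by lra.
      assert (HA : h * q ^ S N <= P * q).
      { assert (Eh : h = P * Rpower h (1 - alpha)).
        { unfold P. rewrite <- Rpower_plus. replace (alpha + (1 - alpha)) with 1 by ring. rewrite Rpower_1; lra. }
        assert (H1 : Rpower h (1 - alpha) <= Rpower b (- INR N * (1 - alpha))).
        { rewrite <- Rpower_mult. apply Rle_Rpower_l; [lra|]. split; auto. }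
        assert (H2 : q ^ S N = Rpower b ((1 - alpha) * INR (S N))).
        { unfold q. rewrite <- Rpower_pow by apply Rpower_pos. rewrite Rpower_mult. reflexivity. }
        assert (Ppos : 0 < P) by apply Rpower_pos.
        rewrite Eh at 1. rewrite H2.
        assert (H3 : 0 < Rpower b ((1 - alpha) * INR (S N))) by apply Rpower_pos.
        apply Rle_trans with (P * (Rpower b (- INR N * (1 - alpha)) * Rpower b ((1 - alpha) * INR (S N)))).
        - rewrite <- Rmult_assoc. apply Rmult_le_compat_r; [lra|]. apply Rmult_le_compat_l; lra.
        - rewrite <- Rpower_plus. unfold q. right. f_equal. f_equal. rewrite S_INR. ring. }
      assert (HB : r ^ S N <= P).
      { unfold r, P. rewrite <- Rpower_pow by apply Rpower_pos. rewrite Rpower_mult.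
        replace (- alpha * INR (S N)) with (- INR (S N) * alpha) by ring.
        rewrite <- (Rpower_mult (bb nu) (- INR (S N)) alpha). apply Rle_Rpower_l; [lra|]. split; [apply Rpower_pos|unfold b in HN1; lra]. }
      assert (Qpos : 0 < q ^ S N) by (apply pow_lt; lra).
      assert (Rpos : 0 < r ^ S N) by (apply pow_lt; lra).
      rewrite Rmult_plus_distr_r. apply Rplus_le_compat.
      * replace (h * ((1 - q ^ S N) / (1 - q))) with ((h * q ^ S N - h) / (q - 1)) by (field; lra).
        replace (q / (q - 1) * P) with ((P * q) / (q - 1)) by (field; lra).
        unfold Rdiv. apply Rmult_le_compat_r; [left; apply Rinv_0_lt_compat; lra| lra].
      * replace (2 * q / (1 - r) * P) with ((2 * q * P) / (1 - r)) by (field; lra).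
        unfold Rdiv. apply Rmult_le_compat_r; [left; apply Rinv_0_lt_compat; lra|].
        assert (0 < P) by apply Rpower_pos. nra.
    + eapply Rle_trans; [apply (diff_all alpha nu Ha Hnu)|]. fold r.
      assert (HP : 1 <= P).
      { rewrite <- (Rpower_one_l alpha). apply Rle_Rpower_l; lra. }
      assert (/ (1 - r) <= 2 * q / (1 - r)).
      { unfold Rdiv. rewrite <- (Rmult_1_l (/ (1 - r))) at 1.
        apply Rmult_le_compat_r; [left; apply Rinv_0_lt_compat; lra| lra]. }
      nra.
Qed.

End S3.

Lemma le_divR u a M : 0 < M -> u * M <= a -> u <= a / M.
Proof. intros HM H. apply (Rmult_le_reg_r M); auto. unfold Rdiv. rewrite Rmult_assoc, Rinv_l, Rmult_1_r; lra. Qed.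
Lemma divR_le a u M : 0 < M -> a <= u * M -> a / M <= u.
Proof. intros HM H. apply (Rmult_le_reg_r M); auto. unfold Rdiv. rewrite Rmult_assoc, Rinv_l, Rmult_1_r; lra. Qed.

Lemma box (i M : Z) a c : (0 < M)%Z -> IZR i <= a <= IZR i + 1 -> IZR i <= c <= IZR i + 1 ->
  exists j : Z, IZR j <= a / IZR M <= IZR j + 1 /\ IZR j <= c / IZR M <= IZR j + 1.
Proof.
  intros HM Ha Hc. exists (i / M)%Z.
  pose proof (Z.div_mod i M ltac:(lia)) as Hd. pose proof (Z.mod_pos_bound i M HM) as Hb.
  set (j := (i / M)%Z) in *. set (rr := (i mod M)%Z) in *.
  assert (Hi : IZR i = IZR M * IZR j + IZR rr) by (rewrite Hd at 1; rewrite plus_IZR, mult_IZR; ring).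
  assert (Hr0 : 0 <= IZR rr) by (apply IZR_le; lia).
  assert (Hr1 : IZR rr + 1 <= IZR M) by (rewrite <- plus_IZR; apply IZR_le; lia).
  assert (HM' : 0 < IZR M) by (apply IZR_lt; lia).
  repeat split.
  - apply le_divR; nra.
  - apply divR_le; nra.
  - apply le_divR; nra.
  - apply divR_le; nra.
Qed.

Lemma pow2_IZR n : exists z : Z, 2 ^ n = IZR z /\ (0 < z)%Z.
Proof.
  exists (Z.of_nat (2 ^ n)). rewrite <- INR_IZR_INZ, pow_INR. simpl INR. split.
  - f_equal; lra.
  - assert (0 < 2 ^ n)%nat by (apply Nat.neq_0_lt_0, Nat.pow_nonzero; lia). lia.
Qed.

Lemma tm_cases nu m x : exists (i : Z) (sg : R), (sg = 1 \/ sg = -1) /\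
  tm nu m x = sg * (/ 2 ^ (2 * nu * m) / 2) /\
  IZR i <= 2 ^ (2 * nu * m) * x <= IZR i + 1 /\
  IZR i <= 2 ^ (2 * nu * m) * x + sg / 2 <= IZR i + 1.
Proof.
  unfold tm. set (p := 2 ^ (2 * nu * m)).
  assert (Hp : 0 < p) by (apply pow_lt; lra).
  assert (Hps : p * / p = 1) by (field; lra).
  assert (Hs : 0 < / p) by (apply Rinv_0_lt_compat; lra).
  destruct excluded_middle_informative as [[i Hi]|Hn].
  - exists i, 1. split; [left; reflexivity|]. split; [ring|].
    assert (H1 : IZR i < p * x) by (replace (IZR i) with (p * (IZR i * / p)) by (field; lra); apply Rmult_lt_compat_l; lra).
    assert (H2 : p * x <= IZR i + / 2) by (replace (IZR i + / 2) with (p * (IZR i * / p + / p / 2)) by (field; lra); apply Rmult_le_compat_l; lra).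
    split; lra.
  - destruct (archimed (- (p * x))) as [A1 A2].
    exists (- up (- (p * x)))%Z, (-1). split; [right; reflexivity|]. split; [ring|].
    rewrite opp_IZR.
    assert (H1 : - IZR (up (- (p * x))) < p * x) by lra.
    assert (H2 : p * x <= - IZR (up (- (p * x))) + 1) by lra.
    assert (H3 : ~ (IZR (- up (- (p * x))) * / p < x <= IZR (- up (- (p * x))) * / p + / p / 2)).
    { intro Hc. apply Hn. eexists; exact Hc. }
    rewrite opp_IZR in H3.
    assert (H4 : - IZR (up (- (p * x))) * / p < x).
    { apply (Rmult_lt_reg_l p); [lra|]. replace (p * (- IZR (up (- (p * x))) * / p)) with (- IZR (up (- (p * x)))) by (field; lra). lra. }
    assert (H5 : x > - IZR (up (- (p * x))) * / p + / p / 2) by (apply Rnot_le_lt; intro; apply H3; split; lra).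
    assert (H6 : p * x > - IZR (up (- (p * x))) + / 2).
    { replace (- IZR (up (- (p * x))) + / 2) with (p * (- IZR (up (- (p * x))) * / p + / p / 2)) by (field; lra).
      apply Rmult_lt_compat_l; lra. }
    split; lra.
Qed.

Section S4.
Variables (alpha : R) (nu : nat) (Ha : 0 < alpha < 1) (Hnu : (1 <= nu)%nat).

Lemma Dsmall x m k : (k <= m)%nat ->
  Rabs (D alpha nu (x + tm nu m x) x k) =
  Rpower 2 (- (2 * alpha * INR nu * INR k)) * (2 ^ (2 * nu * k) * (/ 2 ^ (2 * nu * m) / 2)).
Proof.
  intros Hk. destruct (tm_cases nu m x) as [i [sg [Hsg [Ht [H1 H2]]]]]. rewrite Ht.
  unfold D, T. rewrite <- Rmult_minus_distr_l, Rabs_mult, (Rabs_right (Rpower _ _)) by (left; apply Rpower_pos).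
  f_equal.
  destruct (pow2_IZR (2 * nu * (m - k))) as [z [Hz Hz0]].
  assert (Hpm : 2 ^ (2 * nu * m) = 2 ^ (2 * nu * k) * IZR z).
  { rewrite <- Hz, <- pow_add. f_equal. nia. }
  set (P := 2 ^ (2 * nu * k)) in *. set (PM := 2 ^ (2 * nu * m)) in *.
  assert (HP : 0 < P) by (apply pow_lt; lra). assert (HZ : 0 < IZR z) by (apply IZR_lt; lia).
  destruct (box i z (PM * x) (PM * x + sg / 2) Hz0 H1 H2) as [j [J1 J2]].
  assert (EA : PM * x / IZR z = P * x) by (rewrite Hpm; field; lra).
  assert (EB : (PM * x + sg / 2) / IZR z = P * (x + sg * (/ PM / 2))) by (rewrite Hpm; field; lra).
  rewrite EA in J1. rewrite EB in J2.
  rewrite (phi_affine j _ _ J1 J2).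
  replace (P * (x + sg * (/ PM / 2)) - P * x) with (sg * (P * (/ PM / 2))) by ring.
  rewrite Rabs_mult. assert (Rabs sg = 1) by (destruct Hsg; subst; unfold Rabs; destruct Rcase_abs; lra).
  rewrite H, Rmult_1_l. apply Rabs_right.
  assert (0 < PM) by (rewrite Hpm; nra). left. apply Rmult_lt_0_compat; [lra|]. 
  apply Rmult_lt_0_compat; [apply Rinv_0_lt_compat; lra| lra].
Qed.

Lemma Dbig x m k : (m < k)%nat -> D alpha nu (x + tm nu m x) x k = 0.
Proof.
  intros Hk. destruct (tm_cases nu m x) as [i [sg [Hsg [Ht _]]]]. rewrite Ht.
  unfold D, T.
  destruct (pow2_IZR (2 * nu * (k - m) - 2)) as [z [Hz Hz0]].
  assert (Hpk : 2 ^ (2 * nu * k) = 2 ^ (2 * nu * m) * (2 * 2 * IZR z)).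
  { rewrite <- Hz. replace (2 * 2 * 2 ^ (2 * nu * (k - m) - 2)) with (2 ^ (S (S (2 * nu * (k - m) - 2)))) by (simpl; ring).
    rewrite <- pow_add. f_equal. nia. }
  assert (HPM : 0 < 2 ^ (2 * nu * m)) by (apply pow_lt; lra).
  assert (E : 2 ^ (2 * nu * k) * (x + sg * (/ 2 ^ (2 * nu * m) / 2)) = 2 ^ (2 * nu * k) * x + 2 * IZR (if Rle_dec sg 0 then (- z)%Z else z)).
  { rewrite Hpk. destruct Rle_dec; [rewrite opp_IZR|]; destruct Hsg; subst; try lra; field; lra. }
  rewrite E, phi_per. ring.
Qed.

Lemma Kdiff_sum x m : Kan alpha nu (x + tm nu m x) - Kan alpha nu x = sum_f_R0 (D alpha nu (x + tm nu m x) x) m.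
Proof.
  rewrite (Kan_diff alpha nu Ha Hnu).
  rewrite (Series_incr_n _ (S m)); [| lia | apply ex_series_Rabs, absD_ex; auto].
  rewrite (Series_ext _ (fun _ => 0)) by (intros; apply Dbig; lia).
  rewrite Series_zero. simpl Init.Nat.pred. ring.
Qed.

End S4.

Section S5.
Variables (alpha : R) (nu : nat) (Ha : 0 < alpha < 1) (Hnu : (1 <= nu)%nat).

Lemma lower_raw x m : let q := Rpower (bb nu) (1 - alpha) in let s := / 2 ^ (2 * nu * m) in
  Rabs (Kan alpha nu (x + tm nu m x) - Kan alpha nu x) >= (s / 2) * q ^ m * (q - 2) / (q - 1).
Proof.
  intros q s.
  pose proof (rbq alpha nu Hnu) as Hrbq. pose proof (qgt alpha nu Ha Hnu) as Hq.
  change (Rpower (bb nu) (1 - alpha)) with q in Hrbq, Hq.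
  assert (Hs : 0 < s) by (apply Rinv_0_lt_compat, pow_lt; lra).
  assert (HG : forall k, (k <= m)%nat -> Rabs (D alpha nu (x + tm nu m x) x k) = q ^ k * (s / 2)).
  { intros k Hk. rewrite Dsmall by auto. rewrite w_eq, p2_eq. fold s. rewrite <- Rmult_assoc, <- Rpow_mult_distr.
    rewrite Hrbq. reflexivity. }
  rewrite Kdiff_sum by auto.
  assert (Hqm : 0 < q ^ m) by (apply pow_lt; lra).
  apply Rle_ge. apply Rle_trans with (q ^ m * (s / 2) - (s / 2) * (q ^ m - 1) / (q - 1)).
  - replace (q ^ m * (s / 2) - s / 2 * (q ^ m - 1) / (q - 1)) with (s / 2 * q ^ m * (q - 2) / (q - 1) + (s / 2) / (q - 1)) by (field; lra).
    assert (0 < s / 2 / (q - 1)) by (apply Rdiv_lt_0_compat; lra). lra.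
  - destruct m as [|m'].
    + simpl sum_f_R0. rewrite <- HG by lia. simpl. lra.
    + rewrite tech5. rewrite <- (HG (S m')) by lia.
      set (a := sum_f_R0 (D alpha nu (x + tm nu (S m') x) x) m').
      set (c := D alpha nu (x + tm nu (S m') x) x (S m')).
      assert (Ha' : Rabs a <= s / 2 * (q ^ S m' - 1) / (q - 1)).
      { eapply Rle_trans; [apply sum_f_R0_triangle|].
        rewrite (sum_eq _ (fun k => q ^ k * (s / 2))) by (intros; apply HG; lia).
        rewrite <- scal_sum, tech3 by lra. right. field; lra. }
      pose proof (Rabs_triang_inv c (- a)). replace (c - - a) with (a + c) in H by ring.
      rewrite Rabs_Ropp in H. lra.
Qed.

End S5.

Section S6.
Variables (alpha : R) (nu : nat) (Ha : 0 < alpha < 1) (Hnu : (1 <= nu)%nat).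

Lemma lower_ratio x m beta : alpha < beta <= 1 ->
  Rabs (Kan alpha nu (x + tm nu m x) - Kan alpha nu x) / rpow (Rabs (tm nu m x)) beta >= Kconst m nu alpha beta.
Proof.
  intros Hbeta.
  pose proof (lower_raw alpha nu Ha Hnu x m) as HL. simpl in HL.
  set (q := Rpower (bb nu) (1 - alpha)) in *. set (s := / 2 ^ (2 * nu * m)) in *.
  set (b := bb nu) in *.
  assert (Hb : 4 <= b) by apply bge, Hnu.
  assert (Hs : 0 < s) by (apply Rinv_0_lt_compat, pow_lt; lra).
  assert (Htm : Rabs (tm nu m x) = s / 2).
  { destruct (tm_cases nu m x) as [i [sg [Hsg [Ht _]]]]. rewrite Ht. fold s.
    rewrite Rabs_mult. rewrite (Rabs_right (s / 2)) by lra.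
    destruct Hsg; subst; unfold Rabs; destruct Rcase_abs; lra. }
  rewrite Htm. unfold rpow. destruct Rle_dec as [Hc|_]; [lra|].
  set (W := Rpower (s / 2) beta).
  assert (HW : 0 < W) by apply Rpower_pos.
  assert (Es : s / 2 = Rpower b (- INR m) * Rpower 2 (Ropp 1)).
  { rewrite Rpower_neg_nat by lra. rewrite Rpower_Ropp, Rpower_1 by lra. unfold s. rewrite p2_eq. reflexivity. }
  assert (EW : W = Rpower b (- INR m * beta) * Rpower 2 (Ropp 1 * beta)).
  { unfold W. rewrite Es, <- Rpower_mult_distr by apply Rpower_pos. rewrite !Rpower_mult. reflexivity. }
  assert (Eq : q ^ m = Rpower b ((1 - alpha) * INR m)).
  { unfold q. rewrite <- Rpower_pow by apply Rpower_pos. rewrite Rpower_mult. reflexivity. }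
  assert (E1 : Rpower 2 (beta - 1) * Rpower 2 (Ropp 1 * beta) = Rpower 2 (Ropp 1)) by (rewrite <- Rpower_plus; f_equal; ring).
  assert (E2 : Rpower b ((beta - alpha) * INR m) * Rpower b (- INR m * beta) = Rpower b (- INR m) * Rpower b ((1 - alpha) * INR m))
    by (rewrite <- !Rpower_plus; f_equal; ring).
  assert (EK : Kconst m nu alpha beta * W = s / 2 * q ^ m * (q - 2) / (q - 1)).
  { unfold Kconst. rewrite !R2b. fold q b.
    rewrite <- Rpower_pow by apply Rpower_pos. rewrite Rpower_mult.
    rewrite EW, Eq, Es. change (Rpower b (1 - alpha)) with q.
    transitivity (Rpower 2 (beta - 1) * Rpower 2 (Ropp 1 * beta) * (Rpower b ((beta - alpha) * INR m) * Rpower b (- INR m * beta)) * ((q - 2) / (q - 1))).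
    - unfold Rdiv; ring.
    - rewrite E1, E2. unfold Rdiv; ring. }
  apply Rle_ge, le_divR; [exact HW|]. rewrite EK. apply Rge_le. exact HL.
Qed.

End S6.

Lemma tm_abs nu m x : Rabs (tm nu m x) = / 2 ^ (2 * nu * m) / 2.
Proof.
  assert (0 < / 2 ^ (2 * nu * m)) by (apply Rinv_0_lt_compat, pow_lt; lra).
  destruct (tm_cases nu m x) as [i [sg [Hsg [Ht _]]]]. rewrite Ht.
  rewrite Rabs_mult. rewrite (Rabs_right (_ / 2)) by lra.
  destruct Hsg; subst; unfold Rabs; destruct Rcase_abs; lra.
Qed.

Lemma Cpos alpha nu : 0 < alpha < 1 -> (1 <= nu)%nat -> 0 < Cconst alpha nu.
Proof.
  intros Ha Hnu. rewrite Cconst_eq by auto.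
  pose proof (rpos alpha nu Ha Hnu). pose proof (qgt alpha nu Ha Hnu).
  set (q := Rpower (bb nu) (1 - alpha)) in *. set (r := Rpower (bb nu) (- alpha)) in *.
  assert (1 / (1 - / q) = q / (q - 1)) by (field; lra). rewrite H1.
  assert (0 < q / (q - 1)) by (apply Rdiv_lt_0_compat; lra).
  assert (0 < 2 * q / (1 - r)) by (apply Rdiv_lt_0_compat; lra). lra.
Qed.

Theorem theorem1 (alpha : R) (nu : nat) (Ha : 0 < alpha < 1) (Hnu : (1 <= nu)%nat) :
  (* (i) *)
  (holder_global (Kan alpha nu) alpha /\
   (forall x, 0 <= Kan alpha nu x <= 1 / (1 - Rpower 2 (- (2 * INR nu * alpha)))) /\
   (forall x y, Rabs (x - y) <= 2 ->
      Rabs (Kan alpha nu x - Kan alpha nu y) <= Cconst alpha nu * rpow (Rabs (x - y)) alpha))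
  /\
  (* (ii) *)
  (2 * INR nu > 1 / (1 - alpha) ->
     (forall x beta, alpha < beta <= 1 -> ~ holder_at (Kan alpha nu) beta x) /\
     (forall x (m : nat) beta, alpha < beta <= 1 ->
        Rabs (Kan alpha nu (x + tm nu m x) - Kan alpha nu x) / rpow (Rabs (tm nu m x)) beta
        >= Kconst m nu alpha beta)).
Proof.
  pose proof (Cpos alpha nu Ha Hnu) as HC0.
  split; [split; [split|split]|].
  - intros x0. unfold continuity_pt, continue_in, limit1_in, limit_in. intros eps Heps.
    simpl. unfold R_dist.
    set (C := Cconst alpha nu) in *.
    exists (Rpower (eps / C) (/ alpha)). split; [apply Rpower_pos|].
    intros y [_ Hy].
    eapply Rle_lt_trans; [apply holder_main; auto|]. fold C.
    assert (Hr : rpow (Rabs (y - x0)) alpha < eps / C).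
    { unfold rpow. destruct Rle_dec.
      - apply Rdiv_lt_0_compat; lra.
      - replace (eps / C) with (Rpower (Rpower (eps / C) (/ alpha)) alpha).
        + apply Rlt_Rpower_l; lra.
        + rewrite Rpower_mult, Rinv_l, Rpower_1 by (try apply Rdiv_lt_0_compat; lra). reflexivity. }
    replace eps with (C * (eps / C)) by (field; lra). apply Rmult_lt_compat_l; lra.
  - exists (Cconst alpha nu). intros; apply holder_main; auto.
  - intros x. pose proof (Kan_bounds alpha nu Ha Hnu x).
    replace (- (2 * INR nu * alpha)) with (2 * INR nu * (- alpha)) by ring. rewrite R2b. lra.
  - intros x y _. apply holder_main; auto.
  - intros Hc. split.
    + intros x beta Hb [r0 [C [Hr0 [HC Hhold]]]].
      set (q := Rpower (bb nu) (1 - alpha)).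
      assert (Hq2 : 2 < q).
      { unfold q. rewrite <- R2b. rewrite <- (Rpower_1 2) at 1 by lra. apply Rpower_lt; [lra|].
        assert (1 / (1 - alpha) * (1 - alpha) = 1) by (field; lra). nra. }
      pose proof (bge nu Hnu) as Hb4.
      set (Q := Rpower (bb nu) (beta - alpha)).
      assert (HQ : 1 < Q).
      { unfold Q. assert (E0 : Rpower (bb nu) 0 = 1) by (apply Rpower_O; lra). rewrite <- E0 at 1.
        apply Rpower_lt; lra. }
      set (c0 := Rpower 2 (beta - 1) * (q - 2) / (q - 1)).
      assert (Hc0 : 0 < c0).
      { unfold c0. apply Rdiv_lt_0_compat; [|lra]. apply Rmult_lt_0_compat; [apply Rpower_pos|lra]. }
      assert (HK : forall m, Kconst m nu alpha beta = c0 * Q ^ m).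
      { intros m. unfold Kconst. rewrite !R2b. reflexivity. }
      destruct (arch_nat (Rmax (C / (c0 * (Q - 1))) (/ r0))) as [m Hm].
      pose proof (Rmax_l (C / (c0 * (Q - 1))) (/ r0)). pose proof (Rmax_r (C / (c0 * (Q - 1))) (/ r0)).
      assert (Hm0 : 0 <= INR m) by apply pos_INR.
      assert (Hs : / 2 ^ (2 * nu * m) / 2 <= r0).
      { rewrite p2_eq. pose proof (bern (bb nu) m ltac:(lra)).
        assert (0 < / r0) by (apply Rinv_0_lt_compat; lra).
        assert (/ r0 < bb nu ^ m) by nra.
        assert (/ bb nu ^ m < r0).
        { replace r0 with (/ / r0) by (field; lra). apply Rinv_lt_contravar; [nra|lra]. }
        assert (0 < / bb nu ^ m) by (apply Rinv_0_lt_compat, pow_lt; lra). lra. }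
      pose proof (tm_abs nu m x) as Htm.
      assert (Hy : x - r0 <= x + tm nu m x <= x + r0).
      { revert Htm; unfold Rabs; destruct Rcase_abs; intros; lra. }
      pose proof (Hhold _ Hy) as Hh. replace (x + tm nu m x - x) with (tm nu m x) in Hh by ring.
      pose proof (lower_ratio alpha nu Ha Hnu x m beta Hb) as Hl.
      assert (HW : 0 < rpow (Rabs (tm nu m x)) beta).
      { rewrite Htm. unfold rpow. destruct Rle_dec as [Hc'|]; [|apply Rpower_pos].
        assert (0 < / 2 ^ (2 * nu * m)) by (apply Rinv_0_lt_compat, pow_lt; lra). lra. }
      assert (Hle : Kconst m nu alpha beta <= C).
      { apply Rge_le in Hl. eapply Rle_trans; [exact Hl|]. apply divR_le; auto. }
      rewrite HK in Hle. pose proof (bern Q m ltac:(lra)).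
      assert (C / (c0 * (Q - 1)) * (c0 * (Q - 1)) = C) by (field; split; lra).
      assert (0 < c0 * (Q - 1)) by nra.
      assert (C < INR m * (c0 * (Q - 1))) by nra.
      nra.
    + intros x m beta Hb. apply lower_ratio; auto.
Qed.
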